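(* Let $n\ge 2$ be an integer and let $e$ be the order of the element $b^{-n}a^{-n}(ab)^{n}$ in the Schur multiplier $M(R(2,n))$. If $G$ is any finite group of exponent $n$, then the exponent of $M(G)$ divides $ne$.
   Context: $R(2,n)$ denotes the largest finite $2$-generator group of exponent $n$, written as $R(2,n)=F/R$ with $F$ the free group on free generators $a,b$. For a group $G=F/R$ with $F$ free, the Schur multiplier is given by Hopf's formula $M(G)=(R\cap F')/[F,R]$, a subgroup of $F/[F,R]$. The element $b^{-n}a^{-n}(ab)^{n}[F,R]$ lies in $(R\cap F')/[F,R]=M(R(2,n))$ and $e$ is its order there. *)

(* Defs.v *)
From mathcomp Require Import all_boot all_fingroup all_solvable.
Set Implicit Arguments. Unset Strict Implicit. Unset Printing Implicit Defensive.

(* Free group on a type X: words over letters (x, true) = x, (x, false) = x^-1.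
   Two words represent the same free-group element iff their free reductions
   (wreduce) coincide.  Subgroups of the free group are represented by
   predicates on words that are closed under free equivalence (wgen). *)
Section FreeGroup.
Variable X : eqType.
Definition letter := (X * bool)%type.
Definition word := seq letter.
Definition linv (l : letter) : letter := (l.1, ~~ l.2).
Definition push (l : letter) (s : word) : word :=
  if s is l' :: s' then (if l' == linv l then s' else l :: s) else [:: l].
Definition wreduce (w : word) : word := foldr push [::] w.
Definition winv (w : word) : word := rev (map linv w).
Definition wcomm (u v : word) : word := winv u ++ winv v ++ u ++ v.
Definition wexp (w : word) (k : nat) : word := flatten (nseq k w).

Inductive wgen (S : word -> Prop) : word -> Prop :=
 | wgen_one : wgen S [::]
 | wgen_in w : S w -> wgen S w
 | wgen_mul u v : wgen S u -> wgen S v -> wgen S (u ++ v)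
 | wgen_inv u : wgen S u -> wgen S (winv u)
 | wgen_eq u v : wgen S u -> wreduce u = wreduce v -> wgen S v.

Definition fderived : word -> Prop := wgen (fun w => exists u v, w = wcomm u v).
Definition fcommR (R : word -> Prop) : word -> Prop :=
  wgen (fun w => exists f r, R r /\ w = wcomm f r).

Definition weval (gT : finGroupType) (f : X -> gT) (w : word) : gT :=
  foldr (fun l g => ((if l.2 then f l.1 else (f l.1)^-1) * g)%g) 1%g w.
End FreeGroup.

Definition wa : word bool := [:: (true, true)].
Definition wb : word bool := [:: (false, true)].

(* R = kernel of F -> R(2,n): the intersection of the kernels of all maps of F
   into finite groups of exponent dividing n (R(2,n) is the largest finite
   2-generator group of exponent n). *)
Definition RBkernel (n : nat) (w : word bool) : Prop :=
  forall (hT : finGroupType) (x y : hT),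
    exponent [set: hT] %| n ->
    weval (fun c : bool => if c then x else y) w = 1%g.

Definition wtarget (n : nat) : word bool :=
  wexp (winv wb) n ++ wexp (winv wa) n ++ wexp (wa ++ wb) n.

(* Standard presentation of a finite group G (= [set: gT]):
   F free on the elements of G, R = kernel of the evaluation F -> G. *)
Definition Rker (gT : finGroupType) (w : word gT) : Prop :=
  weval (fun x : gT => x) w = 1%g.

(* Main.v *)
Require Import Defs.
From mathcomp Require Import all_boot all_fingroup all_solvable.
Set Implicit Arguments. Unset Strict Implicit. Unset Printing Implicit Defensive.

Section Free.
Variable X : eqType.
Implicit Types (u v w a b s t : word X) (l : letter X).

Lemma linvK : involutive (@linv X).
Proof. by case=> x b; rewrite /linv /= negbK. Qed.

Fixpoint reduced (s : word X) : bool :=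
  if s is l :: s' then (if s' is l' :: _ then (l' != linv l) && reduced s' else true) else true.

Lemma reduced_cons l s : reduced (l :: s) -> reduced s.
Proof. by case: s => //= l' s /andP[]. Qed.

Lemma push_red l s : reduced s -> reduced (push l s).
Proof.
case: s => [|l' s'] //=; case: ifP => [_|/negbT H] Hs.
  exact: reduced_cons Hs.
by rewrite /= H Hs.
Qed.

Lemma push_cancel l s : reduced s -> push l (push (linv l) s) = s.
Proof.
case: s => [|l' s'] /=; first by rewrite ?eqxx.
rewrite linvK; case: eqP => [->|_] Hs.
  move: Hs; case: s' => //= l'' s'' /andP[H _].
  by rewrite (negbTE H).
by rewrite /push eqxx.
Qed.

Lemma foldr_red s t : reduced s -> reduced (foldr (@push X) s t).
Proof. by move=> Hs; elim: t => //= l t IH; apply: push_red. Qed.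

Lemma wreduce_red u : reduced (wreduce u).
Proof. exact: foldr_red. Qed.

Lemma push_foldr l s t : reduced s ->
  push l (foldr (@push X) s t) = foldr (@push X) s (push l t).
Proof.
move=> Hs; case: t => [|l' t] //=.
case: eqP => [->|_] //=.
by rewrite push_cancel // foldr_red.
Qed.

Lemma foldr_push_red s u : reduced s ->
  foldr (@push X) s u = foldr (@push X) s (wreduce u).
Proof.
move=> Hs; elim: u => //= l u IH.
by rewrite IH push_foldr.
Qed.

Lemma wreduceK u : wreduce (wreduce u) = wreduce u.
Proof. by rewrite /wreduce -foldr_push_red. Qed.

Lemma wreduce_cat u v : wreduce (u ++ v) = foldr (@push X) (wreduce v) (wreduce u).
Proof. by rewrite /wreduce foldr_cat -foldr_push_red // wreduce_red. Qed.

Lemma wreduce_catr u v : wreduce (u ++ v) = wreduce (u ++ wreduce v).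
Proof. by rewrite !wreduce_cat wreduceK. Qed.

Lemma wreduce_catl u v : wreduce (u ++ v) = wreduce (wreduce u ++ v).
Proof. by rewrite !wreduce_cat wreduceK. Qed.

Lemma fe_cat u u' v v' : wreduce u = wreduce u' -> wreduce v = wreduce v' ->
  wreduce (u ++ v) = wreduce (u' ++ v').
Proof. by move=> H1 H2; rewrite !wreduce_cat H1 H2. Qed.

Lemma winv_cat u v : winv (u ++ v) = winv v ++ winv u.
Proof. by rewrite /winv map_cat rev_cat. Qed.

Lemma winvK : involutive (@winv X).
Proof. by move=> u; rewrite /winv map_rev revK -map_comp map_id_in // => l _ /=; rewrite linvK. Qed.

Lemma winv_cons l u : winv (l :: u) = winv u ++ [:: linv l].
Proof. by rewrite /winv /= rev_cons -cats1. Qed.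

Lemma red_mulV u : wreduce (u ++ winv u) = [::].
Proof.
elim: u => //= l u IH.
by rewrite winv_cons catA wreduce_cat IH /= eqxx.
Qed.

Lemma red_Vmul u : wreduce (winv u ++ u) = [::].
Proof. by rewrite -{2}(winvK u) red_mulV. Qed.

Lemma red_cancel a w b : wreduce (a ++ w ++ winv w ++ b) = wreduce (a ++ b).
Proof.
have H: wreduce (w ++ winv w ++ b) = wreduce b by rewrite catA wreduce_catl red_mulV.
by rewrite wreduce_catr H -wreduce_catr.
Qed.

Lemma red_cancel' a w b : wreduce (a ++ winv w ++ w ++ b) = wreduce (a ++ b).
Proof.
have H: wreduce (winv w ++ w ++ b) = wreduce b by rewrite catA wreduce_catl red_Vmul.
by rewrite wreduce_catr H -wreduce_catr.
Qed.

Lemma wexpS w k : wexp w k.+1 = w ++ wexp w k.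
Proof. by []. Qed.

Lemma wexpD w m k : wexp w (m + k) = wexp w m ++ wexp w k.
Proof. by rewrite /wexp nseqD flatten_cat. Qed.

Lemma wexpM w m k : wexp w (m * k) = wexp (wexp w m) k.
Proof. by elim: k => [|k IH]; rewrite ?muln0 // mulnS wexpD IH. Qed.

Lemma wexpSr w k : wexp w k.+1 = wexp w k ++ w.
Proof. by rewrite -addn1 wexpD /wexp /= cats0. Qed.

Lemma winv_wexp w k : winv (wexp w k) = wexp (winv w) k.
Proof. by elim: k => // k IH; rewrite wexpS winv_cat IH wexpSr. Qed.

Lemma fe_wexp u v k : wreduce u = wreduce v -> wreduce (wexp u k) = wreduce (wexp v k).
Proof. by move=> H; elim: k => // k IH; rewrite !wexpS; apply: fe_cat. Qed.

Lemma winv_wcomm u v : winv (wcomm u v) = wcomm v u.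
Proof. by rewrite /wcomm !winv_cat !winvK !catA. Qed.

End Free.

Section Norm.
Variable X : eqType.
Variable R : word X -> Prop.
Implicit Types (u v w a b f g r : word X).
Local Notation N := (fcommR R).

Lemma N_fe u v : N u -> wreduce u = wreduce v -> N v.
Proof. exact: wgen_eq. Qed.

Lemma N_cat u v : N u -> N v -> N (u ++ v).
Proof. exact: wgen_mul. Qed.

Lemma N_inv u : N u -> N (winv u).
Proof. exact: wgen_inv. Qed.

Lemma N_nil : N [::].
Proof. exact: wgen_one. Qed.

Lemma N_comm f r : R r -> N (wcomm f r).
Proof. by move=> Hr; apply: wgen_in; exists f, r. Qed.

Lemma N_conj g u : N u -> N (winv g ++ u ++ g).
Proof.
elim=> {u} [|w [f [r [Hr ->]]]|u v _ IHu _ IHv|u _ IH|u v _ IH E].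
- by apply: (N_fe N_nil); rewrite /= red_Vmul.
- apply: (N_fe (N_cat (N_comm (f ++ g) Hr) (N_inv (N_comm g Hr)))).
  rewrite winv_wcomm /wcomm winv_cat.
  have ->: ((winv g ++ winv f) ++ winv r ++ (f ++ g) ++ r) ++ winv r ++ winv g ++ r ++ g
     = (winv g ++ winv f ++ winv r ++ f ++ g) ++ r ++ winv r ++ (winv g ++ r ++ g)
     by rewrite -!catA.
  rewrite red_cancel.
  have ->: (winv g ++ winv f ++ winv r ++ f ++ g) ++ winv g ++ r ++ g
     = (winv g ++ winv f ++ winv r ++ f) ++ g ++ winv g ++ (r ++ g)
     by rewrite -!catA.
  by rewrite red_cancel -!catA.
- apply: (N_fe (N_cat IHu IHv)).
  have ->: (winv g ++ u ++ g) ++ winv g ++ v ++ g = (winv g ++ u) ++ g ++ winv g ++ (v ++ g)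
     by rewrite -!catA.
  by rewrite red_cancel -!catA.
- by move: (N_inv IH); rewrite !winv_cat winvK catA.
- by apply: (N_fe IH); apply: fe_cat => //; apply: fe_cat.
Qed.

Definition eqv u v := N (u ++ winv v).

Lemma eqv_refl u : eqv u u.
Proof. by apply: (N_fe N_nil); rewrite red_mulV. Qed.

Lemma eqv_sym u v : eqv u v -> eqv v u.
Proof. by move/N_inv; rewrite /eqv winv_cat winvK. Qed.

Lemma eqv_trans u v w : eqv u v -> eqv v w -> eqv u w.
Proof.
move=> H1 H2; apply: (N_fe (N_cat H1 H2)).
by rewrite -catA red_cancel'.
Qed.

Lemma eqv_catr u v w : eqv u v -> eqv (u ++ w) (v ++ w).
Proof.
move=> H; apply: (N_fe H); rewrite winv_cat.
by rewrite -catA red_cancel.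
Qed.

Lemma eqv_catl u v w : eqv u v -> eqv (w ++ u) (w ++ v).
Proof.
move=> H; move: (N_conj (winv w) H); rewrite /eqv winvK winv_cat.
by rewrite -!catA.
Qed.

Lemma eqv_cat u u' v v' : eqv u u' -> eqv v v' -> eqv (u ++ v) (u' ++ v').
Proof. by move=> H1 H2; apply: eqv_trans (eqv_catr _ H1) (eqv_catl _ H2). Qed.

Lemma eqv_fe u v : wreduce u = wreduce v -> eqv u v.
Proof.
move=> H; apply: (N_fe N_nil); apply/esym.
by rewrite wreduce_catl H -wreduce_catl red_mulV.
Qed.

Lemma eqv_N u v : eqv u v -> N v -> N u.
Proof.
move=> H1 H2; apply: (N_fe (N_cat H1 H2)).
by rewrite -catA -[winv v ++ v]cats0 -catA red_cancel' cats0.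
Qed.

Lemma eqv_dropN a m : N m -> eqv (a ++ m) a.
Proof. by move/(N_conj (winv a)); rewrite /eqv winvK -catA. Qed.

Hypothesis RV : forall r, R r -> R (winv r).

Lemma eqv_central r f : R r -> eqv (r ++ f) (f ++ r).
Proof.
move=> Hr; move: (N_inv (N_comm (winv f) (RV Hr))).
by rewrite /eqv winv_wcomm /wcomm !winvK winv_cat -!catA.
Qed.

Hypothesis Rcat : forall r s, R r -> R s -> R (r ++ s).
Hypothesis Rnil : R [::].

Lemma Rwexp r k : R r -> R (wexp r k).
Proof. by move=> Hr; elim: k => // k IH; rewrite wexpS; apply: Rcat. Qed.

Lemma eqv_pow r s k : R r -> R s -> eqv (wexp (r ++ s) k) (wexp r k ++ wexp s k).
Proof.
move=> Hr Hs; elim: k => [|k IH]; first exact: eqv_refl.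
rewrite !wexpS; apply: eqv_trans (eqv_catl _ IH) _.
rewrite -!catA; apply: eqv_catl; rewrite !catA; apply: eqv_catr.
apply: eqv_sym; apply: eqv_central; exact: Rwexp.
Qed.

End Norm.

Section Eval.
Variable gT : finGroupType.
Variables (Y : eqType) (h : Y -> gT).
Implicit Types (u v : word Y).

Lemma weval_cat u v : weval h (u ++ v) = (weval h u * weval h v)%g.
Proof. by elim: u => /= [|l u ->]; rewrite ?mul1g ?mulgA. Qed.

Lemma weval_winv u : weval h (winv u) = (weval h u)^-1%g.
Proof.
elim: u => /= [|[x b] u IH]; first by rewrite invg1.
rewrite winv_cons weval_cat IH /= mulg1 invMg.
by case: b => //=; rewrite invgK.
Qed.

Lemma weval_wexp u k : weval h (wexp u k) = (weval h u ^+ k)%g.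
Proof. by elim: k => // k IH; rewrite wexpS weval_cat IH expgS. Qed.
End Eval.

Section Subst.
Variable gT : finGroupType.
Variables x y : word gT.
Definition sl (l : letter bool) : word gT :=
  if l.2 then (if l.1 then x else y) else winv (if l.1 then x else y).
Definition sub (w : word bool) : word gT := flatten (map sl w).

Lemma sub_cat u v : sub (u ++ v) = sub u ++ sub v.
Proof. by rewrite /sub map_cat flatten_cat. Qed.

Lemma sub_cons l u : sub (l :: u) = sl l ++ sub u.
Proof. by []. Qed.

Lemma sl_linv l : sl (linv l) = winv (sl l).
Proof. by case: l => c [] /=; rewrite /sl /= ?winvK. Qed.

Lemma sub_winv u : sub (winv u) = winv (sub u).
Proof.
elim: u => // l u IH.
by rewrite winv_cons sub_cat IH sub_cons winv_cat /sub /= cats0 sl_linv.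
Qed.

Lemma sub_wexp u k : sub (wexp u k) = wexp (sub u) k.
Proof. by elim: k => // k IH; rewrite !wexpS sub_cat IH. Qed.

Lemma weval_sub u : weval id (sub u) =
  weval (fun c : bool => if c then weval id x else weval id y) u.
Proof.
elim: u => // [[c b] u IH]; rewrite sub_cons weval_cat IH /=.
by case: b; case: c; rewrite /sl /= ?weval_winv.
Qed.

Lemma sub_red u : wreduce (sub u) = wreduce (sub (wreduce u)).
Proof.
elim: u => // l u IH.
rewrite sub_cons wreduce_catr IH -wreduce_catr /=.
case E: (wreduce u) => [|l' t] //=.
case: eqP => [->|_] //.
by rewrite sub_cons sl_linv; exact: (red_cancel [::] (sl l) (sub t)).
Qed.

Lemma sub_fe u v : wreduce u = wreduce v -> wreduce (sub u) = wreduce (sub v).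
Proof. by move=> H; rewrite sub_red H -sub_red. Qed.
End Subst.

Section Main.
Variables (n e : nat) (gT : finGroupType).
Hypothesis expG : exponent [set: gT] = n.
Local Notation RK := (@Rker gT).
Local Notation N := (fcommR RK).

Lemma RK_cat u v : RK u -> RK v -> RK (u ++ v).
Proof. by rewrite /Rker weval_cat => -> ->; rewrite mulg1. Qed.
Lemma RK_inv u : RK u -> RK (winv u).
Proof. by rewrite /Rker weval_winv => ->; rewrite invg1. Qed.
Lemma RK_nil : RK [::].
Proof. by []. Qed.
Lemma RK_pow u : RK (wexp u n).
Proof. by rewrite /Rker weval_wexp -expG expg_exponent ?inE. Qed.

Lemma sub_N x y t : fcommR (RBkernel n) t -> N (sub x y t).
Proof.
elim=> {t} [|w [f [r [Hr ->]]]|u v _ IHu _ IHv|u _ IH|u v _ IH E].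
- exact: N_nil.
- rewrite /wcomm !sub_cat !sub_winv; apply: N_comm.
  by rewrite /Rker weval_sub; apply: Hr; rewrite expG.
- by rewrite sub_cat; apply: N_cat.
- by rewrite sub_winv; apply: N_inv.
- by apply: (N_fe IH); apply: sub_fe.
Qed.

Hypothesis He : fcommR (RBkernel n) (wexp (wtarget n) e).

Lemma hom x y : eqv RK (wexp (x ++ y) (n * e)) (wexp x (n * e) ++ wexp y (n * e)).
Proof.
set Z := wexp (x ++ y) n; set X' := wexp x n; set Y' := wexp y n.
set c := winv Y' ++ winv X' ++ Z.
have Nc : N (wexp c e).
  move: (sub_N x y He); rewrite sub_wexp /wtarget !sub_cat !sub_wexp !sub_winv.
  by rewrite /sub /= !cats0 /sl /= -!winv_wexp.
have RZ : RK Z by apply: RK_pow.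
have RX : RK X' by apply: RK_pow.
have RY : RK Y' by apply: RK_pow.
have Rc : RK c by do !apply: RK_cat => //; apply: RK_inv.
rewrite !wexpM -/Z -/X' -/Y'.
have E : wreduce Z = wreduce (X' ++ Y' ++ c).
  rewrite /c red_cancel; exact: (esym (red_cancel [::] X' Z)).
apply: eqv_trans (eqv_fe _ (fe_wexp e E)) _.
apply: eqv_trans (eqv_pow RK_inv RK_cat RK_nil e RX (RK_cat RY Rc)) _.
apply: eqv_catl.
apply: eqv_trans (eqv_pow RK_inv RK_cat RK_nil e RY Rc) _.
exact: eqv_dropN.
Qed.

Lemma main w : fderived w -> N (wexp w (n * e)).
Proof.
elim=> {w} [|w [u [v ->]]|u v _ IHu _ IHv|u _ IH|u v _ IH E].
- apply: (@N_fe _ RK [::]); first exact: N_nil.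
  by elim: (n * e) => // k IH; rewrite wexpS cat0s.
- set U := wexp u (n * e); set V := wexp v (n * e).
  have RU : RK U by rewrite /U wexpM; apply: Rwexp RK_cat RK_nil _ _ (RK_pow _).
  have RV : RK V by rewrite /V wexpM; apply: Rwexp RK_cat RK_nil _ _ (RK_pow _).
  apply: (eqv_N (v := winv V ++ winv U ++ U ++ V)); last first.
    apply: (@N_fe _ RK [::]); first exact: N_nil.
    by rewrite red_cancel' red_Vmul.
  rewrite /wcomm.
  apply: eqv_trans (hom _ _) _; rewrite winv_wexp -/U.
  apply: eqv_trans (eqv_catl _ (hom _ _)) _; rewrite winv_wexp -/V.
  apply: eqv_trans (eqv_catl _ (eqv_catl _ (hom _ _))) _; rewrite -/U -/V.
  rewrite !catA; do 2 apply: eqv_catr.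
  by rewrite -!winv_wexp -/U -/V; apply: (eqv_central RK_inv); exact: RK_inv.
- by apply: eqv_N (hom _ _) (N_cat IHu IHv).
- by rewrite -winv_wexp; apply: N_inv.
- by apply: (N_fe IH); apply: fe_wexp.
Qed.
End Main.

Theorem theorem1 (n e : nat) (gT : finGroupType) :
  2 <= n ->
  (* e is the order of b^-n a^-n (ab)^n [F,R] in M(R(2,n)) = (R ∩ F')/[F,R] *)
  0 < e ->
  fcommR (RBkernel n) (wexp (wtarget n) e) ->
  (forall k, 0 < k < e -> ~ fcommR (RBkernel n) (wexp (wtarget n) k)) ->
  (* G = [set: gT] is a finite group of exponent n *)
  exponent [set: gT] = n ->
  (* the exponent of M(G) = (R ∩ F')/[F,R] divides n e *)
  forall w : word gT, Rker w -> fderived w ->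
    fcommR (@Rker gT) (wexp w (n * e)).
Proof.
move=> _ _ He _ expG w _ Hw.
exact: (main expG He Hw).
Qed.
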